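(* Let $f\in\{0,1\}^n$ have a $2$-tilde-error overlap of shift $r$ with error positions $i<j$ and operations $O_i,O_j$. Let $\tilde\beta_r(f)=\mathrm{pre}_r(f)\,O_j(f)$. Then $\tilde\beta_r(f)$ is not $f$-free if and only if the $2$-tilde-error overlap satisfies Condition$^\sim$. Here Condition$^\sim$ means: the overlap is of type RR or SS, $r$ is even, $j-i=r/2$, and $f[i..(i+r/2-1)]=f[j..(j+r/2-1)]$.
   Context: Words are over $\{0,1\}$. For $w$ of length $n$: $w[k]$ is its $k$-th symbol, $w[a..b]$ is the factor from position $a$ to $b$, $\mathrm{pre}_l(w)=w[1..l]$ and $\mathrm{suf}_l(w)=w[n-l+1..n]$. A word is $f$-free if it does not contain $f$ as a factor. Operations: the replacement $R_i$ flips the symbol at position $i$. The swap $S_i$ is defined when $w[i]\ne w[i+1]$ and exchanges these two symbols. $\mathrm{dist}_\sim(u,v)$ is the minimum number of replacements and swaps transforming $u$ into the equal-length word $v$. A tilde-transformation is minimal if it uses exactly $\mathrm{dist}_\sim$ operations and modifies each position at most once. $f$ has a $2$-tilde-error overlap of length $l=n-r$ (with $1\le l\le n-1$; $r$ is the shift) if $\mathrm{dist}_\sim(\mathrm{pre}_l(f),\mathrm{suf}_l(f))=2$. In that case fix a minimal tilde-transformation from $\mathrm{pre}_l(f)$ to $\mathrm{suf}_l(f)$. It consists of two operations $O_i\in\{R_i,S_i\}$ and $O_j\in\{R_j,S_j\}$ at positions $i<j$ (the error positions). The words $O_i(f)$ and $O_j(f)$ are obtained by applying these operations to $f$ at the same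 positions. The type is RR, SR, RS or SS according to whether $(O_i,O_j)$ is (replacement, replacement), (swap, replacement), (replacement, swap) or (swap, swap). *)

(* Defs.v *)
(* Binary words are [seq bool]; positions are 1-indexed as in the paper. *)
From mathcomp Require Import all_boot.
Set Implicit Arguments. Unset Strict Implicit. Unset Printing Implicit Defensive.

Definition sym (w : seq bool) (k : nat) : bool := nth false w k.-1.

(* factor w[a..b] (1-indexed, inclusive) *)
Definition factor (w : seq bool) (a b : nat) : seq bool := take (b.+1 - a) (drop a.-1 w).

Definition pre (l : nat) (w : seq bool) : seq bool := take l w.
Definition suf (l : nat) (w : seq bool) : seq bool := drop (size w - l) w.

Definition free (f w : seq bool) : bool := ~~ infix f w.

Inductive op := Rep of nat | Swp of nat.

Definition op_index (o : op) : nat := match o with Rep i => i | Swp i => i end.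
Definition is_rep (o : op) : bool := if o is Rep _ then true else false.
Definition is_swp (o : op) : bool := if o is Swp _ then true else false.

Definition op_pos (o : op) : seq nat :=
  match o with Rep i => [:: i] | Swp i => [:: i; i.+1] end.

Definition op_valid (o : op) (w : seq bool) : bool :=
  match o with
  | Rep i => (0 < i) && (i <= size w)
  | Swp i => [&& 0 < i, i < size w & sym w i != sym w i.+1]
  end.

(* effect of an operation (meaningful when valid) *)
Definition apply_op (o : op) (w : seq bool) : seq bool :=
  match o with
  | Rep i => set_nth false w i.-1 (~~ sym w i)
  | Swp i => set_nth false (set_nth false w i.-1 (sym w i.+1)) i (sym w i)
  end.

Fixpoint run (w : seq bool) (os : seq op) : option (seq bool) :=
  match os with
  | [::] => Some w
  | o :: os' => if op_valid o w then run (apply_op o w) os' else None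
  end.

Definition reach (u v : seq bool) (k : nat) : Prop :=
  exists os : seq op, size os = k /\ run u os = Some v.

Definition tilde_dist (u v : seq bool) (d : nat) : Prop :=
  reach u v d /\ forall k, k < d -> ~ reach u v k.

(* minimal tilde-transformation: uses exactly dist_~ operations and modifies
   each position at most once *)
Definition minimal_tt (u v : seq bool) (os : seq op) : Prop :=
  [/\ run u os = Some v, tilde_dist u v (size os) & uniq (flatten (map op_pos os))].

Definition condition_tilde (f : seq bool) (r : nat) (Oi Oj : op) : Prop :=
  let i := op_index Oi in let j := op_index Oj in
  [/\ (is_rep Oi && is_rep Oj) || (is_swp Oi && is_swp Oj),
      ~~ odd r,
      j - i = r./2 &
      factor f i (i + r./2 - 1) = factor f j (j + r./2 - 1)].

(* Main.v *)
Require Import Defs.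
From mathcomp Require Import all_boot.
From mathcomp Require Import zify.
Set Implicit Arguments. Unset Strict Implicit. Unset Printing Implicit Defensive.

Lemma sym_set (w : seq bool) k b p : 0 < p ->
  sym (set_nth false w k b) p = if p == k.+1 then b else sym w p.
Proof.
move=> hp; rewrite /sym nth_set_nth /=; case: p hp => //= p _.
Qed.

Definition opv (o : op) (w : seq bool) (p : nat) : bool :=
  match o with
  | Rep a => if p == a then ~~ sym w a else sym w p
  | Swp a => if p == a then sym w a.+1 else if p == a.+1 then sym w a else sym w p
  end.

Lemma sym_app o w p : 0 < op_index o -> 0 < p -> sym (apply_op o w) p = opv o w p.
Proof.
case: o => a /= ha hp; rewrite ?sym_set // (prednK ha) //.
case: (p =P a.+1) => [->|h1]; first by rewrite (_ : (a.+1 == a) = false) //; lia.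
by [].
Qed.

Lemma sym_notin o w p : 0 < op_index o -> 0 < p -> p \notin op_pos o ->
  sym (apply_op o w) p = sym w p.
Proof.
move=> ho hp; rewrite sym_app //; case: o ho => a /= _; rewrite !inE.
  by move/negbTE => ->.
by case/norP => /negbTE -> /negbTE ->.
Qed.

Lemma opv_agree o w w' p : p \in op_pos o ->
  (forall q, q \in op_pos o -> sym w q = sym w' q) -> opv o w p = opv o w' p.
Proof.
case: o => a /=; rewrite !inE => hp h.
  by rewrite h ?inE // h ?inE.
by rewrite !h ?inE ?eqxx ?orbT.
Qed.

Lemma size_app o w : op_valid o w -> size (apply_op o w) = size w.
Proof.
case: o => a /=; rewrite ?size_set_nth.
  move=> /andP[h1 h2]; lia.
by move=> /and3P[h1 h2 _]; lia.
Qed.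

Lemma sym_take l w q : 0 < q -> q <= l -> sym (take l w) q = sym w q.
Proof. by move=> h1 h2; rewrite /sym nth_take //; lia. Qed.

Lemma sym_drop r w q : 0 < q -> sym (drop r w) q = sym w (q + r).
Proof. by move=> h; rewrite /sym nth_drop; congr nth; lia. Qed.

Lemma size_app' o w : 0 < op_index o -> (forall p, p \in op_pos o -> p <= size w) ->
  size (apply_op o w) = size w.
Proof.
case: o => a /= ha h; rewrite ?size_set_nth.
  have := h a; rewrite inE eqxx => /(_ isT); lia.
have := h a.+1; rewrite !inE eqxx orbT => /(_ isT); lia.
Qed.

Lemma valid_range o w : op_valid o w ->
  0 < op_index o /\ forall p, p \in op_pos o -> 0 < p <= size w.
Proof.
case: o => a /=.
  by move=> /andP[h1 h2]; split => // p; rewrite inE => /eqP->; lia.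
by move=> /and3P[h1 h2 _]; split => // p; rewrite !inE => /orP[] /eqP->; lia.
Qed.

Lemma opv_neq o w q : q \in op_pos o ->
  (is_swp o -> sym w (op_index o) != sym w (op_index o).+1) -> opv o w q != sym w q.
Proof.
case: o => a /=; rewrite !inE.
  move=> /eqP-> _; have -> : (a == a) = true by apply/eqP.
  by case: (sym w a).
move=> /orP[] /eqP-> /(_ isT) h.
  have -> : (a == a) = true by apply/eqP.
  by rewrite eq_sym.
have -> : (a.+1 == a) = false by lia.
by have -> : (a.+1 == a.+1) = true by apply/eqP.
Qed.

Lemma sym_occ (s f s' : seq bool) y : 0 < y <= size f ->
  sym (s ++ f ++ s') (y + size s) = sym f y.
Proof.
move=> hy; rewrite /sym nth_cat.
have -> : ((y + size s).-1 < size s) = false by lia.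
rewrite nth_cat.
have -> : ((y + size s).-1 - size s < size f) = true by lia.
congr nth; lia.
Qed.

Lemma sym_beta (p g : seq bool) r y : size p = r -> 0 < y ->
  sym (p ++ g) y = if y <= r then sym p y else sym g (y - r).
Proof.
move=> hp hy; rewrite /sym nth_cat hp.
case: (leqP y r) => h.
  by have -> : (y.-1 < r) = true by lia.
have -> : (y.-1 < r) = false by lia.
congr nth; lia.
Qed.

Lemma factor_eq (f : seq bool) a b h : 0 < a -> 0 < b ->
  (forall t, t < h -> sym f (a + t) = sym f (b + t)) ->
  a + h - 1 <= size f -> b + h - 1 <= size f ->
  factor f a (a + h - 1) = factor f b (b + h - 1).
Proof.
move=> ha hb H h1 h2; rewrite /factor.
have -> : (a + h - 1).+1 - a = h by lia.
have -> : (b + h - 1).+1 - b = h by lia.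
apply: (@eq_from_nth _ false).
  rewrite !size_take !size_drop; case: ifP; case: ifP; lia.
move=> t; rewrite size_take size_drop => ht.
have ht' : t < h by move: ht; case: ifP; lia.
rewrite !nth_take // !nth_drop.
have := H t ht'; rewrite /sym.
have -> : (a + t).-1 = a.-1 + t by lia.
by have -> : (b + t).-1 = b.-1 + t by lia.
Qed.

Lemma factor_eqE (f : seq bool) a b h : 0 < a -> 0 < b ->
  factor f a (a + h - 1) = factor f b (b + h - 1) ->
  a + h - 1 <= size f -> b + h - 1 <= size f ->
  forall t, t < h -> sym f (a + t) = sym f (b + t).
Proof.
move=> ha hb H h1 h2 t ht; move: H; rewrite /factor.
have -> : (a + h - 1).+1 - a = h by lia.
have -> : (b + h - 1).+1 - b = h by lia.
move=> /(congr1 (nth false ^~ t)); rewrite !nth_take // !nth_drop /sym.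
have -> : (a + t).-1 = a.-1 + t by lia.
by have -> : (b + t).-1 = b.-1 + t by lia.
Qed.

Lemma opv_rep a w : opv (Rep a) w a = ~~ sym w a.
Proof. by rewrite /= eqxx. Qed.
Lemma opv_swp1 a w : opv (Swp a) w a = sym w a.+1.
Proof. by rewrite /= eqxx. Qed.
Lemma opv_swp2 a w : opv (Swp a) w a.+1 = sym w a.
Proof. by rewrite /= eqxx; have -> : (a.+1 == a) = false by lia. Qed.

Ltac keep_arith := repeat match goal with
 | H : is_true (_ <= _) |- _ => revert H
 | H : @eq nat _ _ |- _ => revert H
 | H : is_true (_ || _) |- _ => revert H
 | H : (_ <= _) = _ |- _ => revert H
 | H : is_true (~~ (_ <= _)) |- _ => revert H
 | H : is_true (_ && _) |- _ => revert H
 | H : is_true (@eq_op Datatypes_nat__canonical__eqtype_Equality _ _) |- _ => revert H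
 end.
Ltac clean := keep_arith; repeat match goal with H : _ |- _ => clear H end.
Ltac slia := clean; lia.

Theorem lemma4 (f : seq bool) (r : nat) (Oi Oj : op) :
  let n := size f in
  let l := n - r in
  1 <= l <= n - 1 ->
  tilde_dist (pre l f) (suf l f) 2 ->
  minimal_tt (pre l f) (suf l f) [:: Oi; Oj] ->
  op_index Oi < op_index Oj ->
  (~~ free f (pre r f ++ apply_op Oj f) <-> condition_tilde f r Oi Oj).
Proof.
cbv zeta.
remember (size f - r) as l eqn:hl.
remember (size f) as n eqn:hn.
move=> /andP[hl1 hl2] _ [hrun _ huniq] hij.
have hsuf : suf l f = drop r f by rewrite /suf -hn; congr drop; slia.
rewrite hsuf /pre in hrun; rewrite /pre.
move: hrun => /=.
set u := take l f.
case hvi: (op_valid Oi u) => //.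
set w1 := apply_op Oi u.
case hvj: (op_valid Oj w1) => // -[hv].
have hsu : size u = l by rewrite /u size_takel; slia.
have [hi0 hPi] := valid_range hvi.
have [hj0 hPj] := valid_range hvj.
have hs1 : size w1 = l by rewrite /w1 size_app.
rewrite hsu in hPi; rewrite hs1 in hPj.
set i := op_index Oi in hi0 hij *.
set j := op_index Oj in hj0 hij *.
have hord : forall q q', q \in op_pos Oi -> q' \in op_pos Oj -> q < q'.
  move: huniq hij; rewrite /i /j; case: (Oi) => a; case: (Oj) => b /=;
  rewrite !inE /= ?andbT => hu hab q q'; rewrite ?inE; slia.
have hPimin : forall q, q \in op_pos Oi -> i <= q.
  by rewrite /i; case: (Oi) => a /= q; rewrite !inE; slia.
have hPjmin : forall q, q \in op_pos Oj -> j <= q.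
  by rewrite /j; case: (Oj) => a /= q; rewrite !inE; slia.
have hiPi : i \in op_pos Oi by rewrite /i; case: (Oi) => a /=; rewrite inE eqxx.
have hjPj : j \in op_pos Oj by rewrite /j; case: (Oj) => a /=; rewrite inE eqxx.
have hu : forall q, 0 < q -> q <= l -> sym u q = sym f q by move=> q *; rewrite sym_take.
have hnPj : forall q, q \in op_pos Oi -> q \notin op_pos Oj.
  by move=> q hq; apply/negP => /(hord _ _ hq); slia.
have hnPi : forall q, q \in op_pos Oj -> q \notin op_pos Oi.
  by move=> q hq; apply/negP => /hord /(_ hq); slia.
have hvsym : forall q, 0 < q -> sym f (q + r) = sym (apply_op Oj w1) q.
  by move=> q hq; rewrite hv sym_drop.
have E1 : forall q, 0 < q -> q <= l -> q \notin op_pos Oi -> q \notin op_pos Oj ->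
    sym f (q + r) = sym f q.
  move=> q h1 h2 h3 h4; rewrite hvsym // sym_notin // /w1 sym_notin //; exact: hu.
have Ei : forall q, q \in op_pos Oi -> sym f (q + r) = opv Oi f q.
  move=> q hq; have := hPi q hq => /andP[q0 ql].
  rewrite hvsym // sym_notin ?hnPj // /w1 sym_app //.
  apply: opv_agree => // q' hq'; have := hPi q' hq' => /andP[*]; exact: hu.
have Ej : forall q, q \in op_pos Oj -> sym f (q + r) = opv Oj f q.
  move=> q hq; have := hPj q hq => /andP[q0 ql].
  rewrite hvsym // sym_app //.
  apply: opv_agree => // q' hq'; have := hPj q' hq' => /andP[*].
  by rewrite /w1 sym_notin ?hnPi // hu.
have Si : is_swp Oi -> sym f i != sym f i.+1.
  move: hvi hPi; rewrite /i; case: (Oi) => //= a /and3P[_ _ h] hP _.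
  have := hP a.+1; rewrite !inE eqxx orbT => /(_ isT) /andP[h1 h2].
  have := hP a; rewrite !inE eqxx => /(_ isT) /andP[h3 h4].
  by rewrite -(hu a) -?(hu a.+1) //; slia.
have hw1j : forall q, q \in op_pos Oj -> sym w1 q = sym f q.
  move=> q hq; have := hPj q hq => /andP[q0 ql].
  by rewrite /w1 sym_notin ?hnPi // hu.
have Sj : is_swp Oj -> sym f j != sym f j.+1.
  move: hvj hw1j; rewrite /j; case: (Oj) => //= a /and3P[_ _ h] hw _.
  by rewrite -hw ?inE ?eqxx // -hw // !inE eqxx orbT.
set g := apply_op Oj f.
have hG1 : forall p, 0 < p -> p \notin op_pos Oj -> sym g p = sym f p.
  by move=> p *; rewrite /g sym_notin.
have hG2 : forall p, p \in op_pos Oj -> sym g p = sym f (p + r).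
  move=> p hp; have := hPj p hp => /andP[p0 _].
  by rewrite /g sym_app // Ej.
have hF2i : forall q, q \in op_pos Oi -> sym f (q + r) != sym f q.
  by move=> q hq; rewrite Ei //; apply: opv_neq.
have hF2j : forall q, q \in op_pos Oj -> sym f (q + r) != sym f q.
  by move=> q hq; rewrite Ej //; apply: opv_neq.
have hsg : size g = n.
  rewrite /g size_app' // => p /hPj; slia.
have hbeta : forall y, 0 < y ->
    sym (take r f ++ g) y = if y <= r then sym f y else sym g (y - r).
  move=> y hy; rewrite (@sym_beta _ _ r) //; last by rewrite size_takel; slia.
  by case: ifP => // hyr; rewrite sym_take.
have hsb : size (take r f ++ g) = r + n.
  rewrite size_cat hsg size_takel; slia.
split.
  rewrite /free negbK => /infixP [s [s' hb]].
  set k := size s.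
  have hk : k <= r.
    move: (congr1 size hb); rewrite hsb !size_cat -hn; slia.
  have hocc : forall y, 0 < y <= n ->
      (if y + k <= r then sym f (y + k) else sym g (y + k - r)) = sym f y.
    move=> y hy; rewrite -hbeta; last slia.
    by rewrite hb sym_occ // -hn.
  have := hPi i hiPi => /andP[_ hil].
  have := hPj j hjPj => /andP[_ hjl].
  have hk0 : 0 < k.
    case: (posnP k) => // hk0; exfalso.
    have := hocc (i + r); rewrite hk0 addn0.
    have -> : (i + r <= r) = false by slia.
    rewrite (_ : i + r - r = i); last slia.
    rewrite hG1 //; last by apply: hnPj.
    move=> H; have := hF2i i hiPi; rewrite -H ?eqxx //; slia.
  have hkr : k < r.
    rewrite ltn_neqAle hk andbT; apply/eqP => hkr; exfalso.
    have := hocc j; rewrite -hkr.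
    have -> : (j + k <= k) = false by slia.
    rewrite (_ : j + k - k = j); last slia.
    rewrite hG2 //.
    move=> H; have := hF2j j hjPj; rewrite H ?eqxx //; slia.
  set d := r - k.
  have hd : d = r - k by [].
  have L1 : forall y, 0 < y -> y + k <= n ->
      ~~ (r < y + k) || (y + k - r \notin op_pos Oi) -> sym f (y + k) = sym f y.
    move=> y y0 yn hc; have := hocc y; case: ifP => hyr; first by apply; slia.
    move=> H; rewrite -H; last slia.
    have hc' : y + k - r \notin op_pos Oi by move: hc; rewrite ltnNge hyr.
    case: (boolP (y + k - r \in op_pos Oj)) => hp.
      by rewrite hG2 // (_ : y + k - r + r = y + k) //; slia.
    rewrite hG1 //; last slia.
    rewrite -(E1 (y + k - r)) //; try slia.
    by rewrite (_ : y + k - r + r = y + k) //; slia.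
  have L2 : forall q, 0 < q -> q + d <= n -> q \notin op_pos Oj -> sym f (q + d) = sym f q.
    move=> q q0 qn hq; have := hocc (q + d).
    have -> : (q + d + k <= r) = false by slia.
    rewrite (_ : q + d + k - r = q); last slia.
    by rewrite hG1 // => ->; slia.
  have Lkey : forall q, 0 < q -> q <= l -> sym f (q + r) != sym f q ->
      (d < q) && (q - d \in op_pos Oi) || (q + k \in op_pos Oj).
    move=> q q0 ql; apply: contraR => /norP [h1 h2].
    rewrite (_ : q + r = (q + k) + d); last slia.
    rewrite L2 //; try slia.
    rewrite L1 //; try slia.
    case: (ltnP r (q + k)) => hh //=.
    rewrite (_ : q + k - r = q - d); last slia.
    by move: h1; rewrite (_ : d < q = true) //; slia.
  have key : ((is_rep Oi && is_rep Oj) || (is_swp Oi && is_swp Oj)) /\ k = d /\ j = i + k.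
    move: (Lkey) (L1) (L2) Si Sj hij hF2i hF2j hPi hPj hord.
    rewrite /i /j; case: (Oi) => a; case: (Oj) => b /=
      => Lk L1' L2' Si' Sj' hab F2i F2j hPi' hPj' hord'.
    - have ma : a \in [:: a] by rewrite inE.
      have mb : b \in [:: b] by rewrite inE.
      have /andP[a0 al] := hPi' a ma.
      have /andP[b0 bl] := hPj' b mb.
      have K1 := Lk a a0 al (F2i a ma).
      have K2 := Lk b b0 bl (F2j b mb).
      rewrite !inE in K1 K2; split => //; slia.
    - have ma : a \in [:: a] by rewrite inE.
      have mb : b \in [:: b; b.+1] by rewrite inE eqxx.
      have mb1 : b.+1 \in [:: b; b.+1] by rewrite !inE eqxx orbT.
      have /andP[a0 al] := hPi' a ma.
      have /andP[b0 bl] := hPj' b mb.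
      have /andP[b10 b1l] := hPj' b.+1 mb1.
      have K1 := Lk a a0 al (F2i a ma).
      have K2 := Lk b b0 bl (F2j b mb).
      have K3 := Lk b.+1 b10 b1l (F2j b.+1 mb1).
      rewrite !inE in K1 K2 K3.
      have hk1 : k = 1 by slia.
      exfalso; have := L1' b b0; rewrite hk1 addn1 inE => H.
      have := Sj' isT; rewrite H ?eqxx //; slia.
    - have ma : a \in [:: a; a.+1] by rewrite inE eqxx.
      have ma1 : a.+1 \in [:: a; a.+1] by rewrite !inE eqxx orbT.
      have mb : b \in [:: b] by rewrite inE.
      have /andP[a0 al] := hPi' a ma.
      have /andP[a10 a1l] := hPi' a.+1 ma1.
      have /andP[b0 bl] := hPj' b mb.
      have K1 := Lk a a0 al (F2i a ma).
      have K2 := Lk a.+1 a10 a1l (F2i a.+1 ma1).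
      have K3 := Lk b b0 bl (F2j b mb).
      have hab' := hord' a.+1 b ma1 mb.
      rewrite !inE in K1 K2 K3.
      have hd1 : d = 1 by slia.
      exfalso; have := L2' a a0; rewrite hd1 addn1 inE => H.
      have := Si' isT; rewrite H ?eqxx //; slia.
    - have ma : a \in [:: a; a.+1] by rewrite inE eqxx.
      have ma1 : a.+1 \in [:: a; a.+1] by rewrite !inE eqxx orbT.
      have mb : b \in [:: b; b.+1] by rewrite inE eqxx.
      have mb1 : b.+1 \in [:: b; b.+1] by rewrite !inE eqxx orbT.
      have /andP[a0 al] := hPi' a ma.
      have /andP[a10 a1l] := hPi' a.+1 ma1.
      have /andP[b0 bl] := hPj' b mb.
      have /andP[b10 b1l] := hPj' b.+1 mb1.
      have K1 := Lk a a0 al (F2i a ma).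
      have K2 := Lk a.+1 a10 a1l (F2i a.+1 ma1).
      have K3 := Lk b b0 bl (F2j b mb).
      have K4 := Lk b.+1 b10 b1l (F2j b.+1 mb1).
      have hab' := hord' a.+1 b ma1 mb.
      rewrite !inE in K1 K2 K3 K4; split => //; slia.
  case: key => htype [hkd hjk].
  have hr2 : r = k + k by slia.
  rewrite /condition_tilde -/i -/j hr2 addnn odd_double doubleK.
  split => //; first by slia.
  apply: factor_eq; try slia.
  move=> t ht; rewrite hjk -addnA (addnC k) addnA L1 //; try slia.
  case: (ltnP r (i + t + k)) => hh //=.
  by apply/negP => /hPimin; slia.
rewrite /condition_tilde -/i -/j => -[htype hodd hji hfac].
set h := r./2 in hji hfac.
have hr : r = h + h.
  by have := odd_double_half r; rewrite (negbTE hodd) add0n -addnn.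
have hj : j = i + h by slia.
have := hPi i hiPi => /andP[_ hil].
have := hPj j hjPj => /andP[_ hjl].
have hfac' : forall t, t < h -> sym f (i + t) = sym f (j + t).
  by apply: (factor_eqE hi0 hj0 hfac); rewrite -hn; slia.
have C1 : forall m q, j - q <= m -> 0 < q -> q <= j - 1 -> sym f (q + h) = sym f q.
  elim=> [|m IH] q hm q0 qj; first by slia.
  case: (leqP i q) => hiq.
    have := hfac' (q - i); rewrite (_ : i + (q - i) = q); last slia.
    rewrite (_ : j + (q - i) = q + h); last slia.
    by move=> ->; slia.
  rewrite -(E1 q) //; try slia.
    rewrite hr addnA (IH (q + h)) //; slia.
  by apply/negP => /hPimin; slia.
  by apply/negP => /hPjmin; slia.
have C1' : forall q, 0 < q -> q <= j - 1 -> sym f (q + h) = sym f q.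
  by move=> q; apply: (C1 (j - q)).
have [C3a C3b] : (forall p, p \in op_pos Oi -> p + h \in op_pos Oj) /\
          (forall q, q \in op_pos Oj -> sym f (q + h) = sym f (q + r)).
  move: htype Ei Ej C1' hj hr hPi hord; rewrite /i /j.
  case: (Oi) => a; case: (Oj) => b => ht Ei' Ej' C1'' hb hr' hPi' hord';
    move: ht hb C1'' => /= ht hb C1''; try by case: ht.
    have /andP[a0 _] := hPi' a (mem_head _ _).
    split => [p|q]; rewrite /op_pos !inE => /eqP->; first by slia.
    rewrite (Ej' b) ?inE // opv_rep (_ : b + h = a + r); last slia.
    rewrite Ei' ?inE // opv_rep -(C1'' a) -?hb //; slia.
  have /andP[a0 _] := hPi' a (mem_head _ _).
  have hab : a.+1 < b by apply: hord'; rewrite /op_pos !inE eqxx ?orbT.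
  split => [p|q]; rewrite /op_pos !inE; first by slia.
  case/orP => /eqP->.
    rewrite (Ej' b) ?inE ?eqxx // opv_swp1 (_ : b + h = a + r); last slia.
    rewrite Ei' ?inE ?eqxx // opv_swp1 -(C1'' a.+1); try slia.
    by rewrite (_ : a.+1 + h = b.+1) //; slia.
  rewrite (Ej' b.+1) ?inE ?eqxx ?orbT // opv_swp2 (_ : b.+1 + h = a.+1 + r); last slia.
  rewrite Ei' ?inE ?eqxx ?orbT // opv_swp2 -(C1'' a); try slia.
  by rewrite (_ : a + h = b) //; slia.
have C2 : forall m q, q <= m -> 0 < q -> q + h <= n -> q \notin op_pos Oj ->
    sym f (q + h) = sym f q.
  elim=> [|m IH] q hm q0 qn qP; first by slia.
  case: (leqP q (j - 1)) => hq; first by apply: C1'.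
  case: (boolP ((q - h) \in op_pos Oj)) => hpj.
    have := C3b (q - h) hpj; rewrite (_ : q - h + h = q); last slia.
    by rewrite (_ : q - h + r = q + h); [move=> -> | slia].
  have hpi : q - h \notin op_pos Oi.
    apply/negP => /C3a; rewrite (_ : q - h + h = q); last slia.
    by rewrite (negbTE qP).
  have b1 : 0 < q - h by slia.
  have b2 : q - h <= l by slia.
  have b3 : q - h <= m by slia.
  have b4 : q - h + h <= n by slia.
  have e1 := E1 (q - h) b1 b2 hpi hpj.
  have e2 := IH (q - h) b3 b1 b4 hpj.
  rewrite (_ : q - h + r = q + h) in e1; last slia.
  rewrite (_ : q - h + h = q) in e2; last slia.
  by rewrite e1 e2.
have occ : forall y, 0 < y <= n -> sym (take r f ++ g) (y + h) = sym f y.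
  move=> y /andP[y0 yn]; rewrite hbeta; last slia.
  case: ifP => hy.
    by apply: C1'; slia.
  case: (boolP ((y + h - r) \in op_pos Oj)) => hq.
    rewrite hG2 // -C3b //.
    by rewrite (_ : y + h - r + h = y) //; slia.
  rewrite hG1 //; last slia.
  rewrite -(C2 (y + h - r) (y + h - r)) //; try slia.
  by rewrite (_ : y + h - r + h = y) //; slia.
rewrite /free negbK; apply/infixP.
set beta := take r f ++ g.
exists (take h beta), (drop (h + n) beta).
have hf : take n (drop h beta) = f.
  apply: (@eq_from_nth _ false).
    rewrite size_takel -?hn // size_drop hsb; slia.
  rewrite size_takel; last by rewrite size_drop hsb; slia.
  move=> t ht; rewrite nth_take // nth_drop.
  have := occ t.+1; rewrite /sym.
  rewrite (_ : (t.+1 + h).-1 = h + t); last slia.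
  by move=> -> //; slia.
by rewrite -{1}(cat_take_drop h beta) -{1}(cat_take_drop n (drop h beta)) hf drop_drop addnC.
Qed.
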